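(* Let $E$ be an IL FS encoder with $s$ states whose Kraft matrix is irreducible, let $L_{\max}=\max_{z,x}L[f(z,x)]$, let $\ell$ be a positive integer, and let $(Z,X^\ell)$ be random variables with an arbitrary joint distribution $P$ on $\mathcal{Z}\times\mathcal{X}^\ell$. Then $$\frac{\mathbb{E}\{L[f(Z,X^\ell)]\}}{\ell}\ \ge\ \frac{H(Z,X^\ell)}{\ell}-\frac{2\log_2 s+(s-1)L_{\max}}{\ell}\ \ge\ \frac{H(X^\ell)}{\ell}-\frac{2\log_2 s+(s-1)L_{\max}}{\ell},$$ where entropies are in bits. If moreover the marginal of $X^\ell$ is the $\ell$-dimensional marginal of a stationary process, then $$\frac{\mathbb{E}\{L[f(Z,X^\ell)]\}}{\ell}\ \ge\ H(X_\ell\mid X^{\ell-1})-\frac{2\log_2 s+(s-1)L_{\max}}{\ell}.$$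
   Context: A finite-state (FS) encoder is a quintuple $E=(\mathcal{X},\mathcal{Y},\mathcal{Z},f,g)$, where $\mathcal{X}$ is a finite source alphabet of size $\alpha$, $\mathcal{Y}$ is a finite set of binary strings (possibly containing the empty string, of length $0$), $\mathcal{Z}$ is a finite set of $s$ states, $f:\mathcal{Z}\times\mathcal{X}\to\mathcal{Y}$ is the output function and $g:\mathcal{Z}\times\mathcal{X}\to\mathcal{Z}$ is the next-state function. For $z\in\mathcal{Z}$ and $x^n=(x_1,\dots,x_n)\in\mathcal{X}^n$, set $z_1=z$, $z_{i+1}=g(z_i,x_i)$; write $g(z,x^n)=z_{n+1}$ and let $f(z,x^n)$ denote the binary string obtained by concatenating $f(z_1,x_1),\dots,f(z_n,x_n)$; its length is $L[f(z,x^n)]=\sum_{i=1}^n L[f(z_i,x_i)]$, where $L(\cdot)$ denotes the length of a binary string. The encoder is information lossless (IL) if for every $z\in\mathcal{Z}$ and every $n\ge1$, the map $x^n\mapsto (f(z,x^n),g(z,x^n))$ is injective on $\mathcal{X}^n$. The Kraft matrix of $E$ is the $s\times s$ nonnegative matrix $K$ with entries $K_{zz'}=\sum_{\{x\in\mathcal{X}:\ g(z,x)=z'\}}2^{-L[f(z,x)]}$ (an empty sum is $0$). *)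

(* Defs.v *)
From HB Require Import structures.
From mathcomp Require Import all_boot all_order all_algebra.
From mathcomp Require Import reals exp.
Set Implicit Arguments. Unset Strict Implicit. Unset Printing Implicit Defensive.
Import Order.TTheory GRing.Theory Num.Theory.
Local Open Scope ring_scope.

Section FS.
Variable R : realType.

(* logarithm base 2 (ln 0 = 0 in mathcomp-analysis, so 0 * log2 0 = 0) *)
Definition log2 (x : R) : R := ln x / ln 2.

Variables (X : finType) (s : nat).
Variables (f : 'I_s -> X -> seq bool) (g : 'I_s -> X -> 'I_s).

Fixpoint fstar (z : 'I_s) (xs : seq X) : seq bool :=
  if xs is x :: xs' then f z x ++ fstar (g z x) xs' else [::].

Fixpoint gstar (z : 'I_s) (xs : seq X) : 'I_s :=
  if xs is x :: xs' then gstar (g z x) xs' else z.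

Definition IL : Prop :=
  forall (z : 'I_s) (n : nat), (0 < n)%N ->
    injective (fun xs : n.-tuple X => (fstar z xs, gstar z xs)).

Definition kraft_matrix : 'M[R]_s :=
  \matrix_(z, z') \sum_(x : X | g z x == z') 2%:R ^- size (f z x).

Definition irreducible_mx (n : nat) (A : 'M[R]_n) : Prop :=
  forall i j : 'I_n, exists m : nat,
    0 < (iter m (fun B => B *m A) 1%:M) i j.

Definition Lmax : nat := \max_(zx : 'I_s * X) size (f zx.1 zx.2).

End FS.

Section Prob.
Variable R : realType.

Definition is_pmf (T : finType) (P : T -> R) : Prop :=
  (forall t, 0 <= P t) /\ \sum_t P t = 1.

Definition entropy (T : finType) (P : T -> R) : R :=
  - \sum_t P t * log2 (P t).

(* The law of a stationary process on X, given by its cylinder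
   probabilities mu w = Pr[(X_1,...,X_|w|) = w]: a consistent, shift-invariant
   family of finite-dimensional distributions (Kolmogorov). *)
Definition stationary_process (X : finType) (mu : seq X -> R) : Prop :=
  [/\ mu [::] = 1,
      forall w, 0 <= mu w,
      forall w, \sum_(x : X) mu (rcons w x) = mu w
    & forall w, \sum_(x : X) mu (x :: w) = mu w].

Definition cond_entropy_last (X : finType) (mu : seq X -> R) (l : nat) : R :=
  - \sum_(xs : l.-tuple X) mu xs * log2 (mu xs / mu (take l.-1 xs)).

End Prob.

(* Main.v *)
Require Import Defs.
From HB Require Import structures.
From mathcomp Require Import all_boot all_order all_algebra.
From mathcomp Require Import reals exp.
From mathcomp Require Import lra ring zify.
Import Order.TTheory GRing.Theory Num.Theory.
Local Open Scope ring_scope.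

Module Helpers.
Set Implicit Arguments. Unset Strict Implicit. Unset Printing Implicit Defensive.

Fixpoint words (T : finType) (n : nat) : seq (seq T) :=
  if n is n'.+1 then [seq x :: w | x <- enum T, w <- words T n'] else [:: [::]].

Lemma mem_words (T : finType) n w : (w \in words T n) = (size w == n).
Proof.
elim: n w => [|n IH] [|x w] //=.
  by apply/allpairsP => -[[a b] [_ _]].
rewrite eqSS -IH.
apply/allpairsP/idP => [[[a b] [_ Hb [_ ->]]] //|Hs].
by exists (x, w); rewrite mem_enum.
Qed.

Lemma uniq_words (T : finType) n : uniq (words T n).
Proof.
elim: n => [|n IH] //=; apply: allpairs_uniq => //; first exact: enum_uniq.
by move=> [a b] [c d] _ _ /= [-> ->].
Qed.

Lemma size_words (T : finType) n : size (words T n) = (#|T| ^ n)%N.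
Proof.
elim: n => [|n IH] //=; by rewrite size_allpairs IH -cardE expnS.
Qed.

Section Sums.
Variable R : realType.

Lemma sum_words_cons (T : finType) n (F : seq T -> R) :
  \sum_(w <- words T n.+1) F w = \sum_(x : T) \sum_(w <- words T n) F (x :: w).
Proof. by rewrite /= big_allpairs_dep big_enum. Qed.

Lemma sum_words_rcons (T : finType) n (F : seq T -> R) :
  \sum_(w <- words T n.+1) F w = \sum_(v <- words T n) \sum_(x : T) F (rcons v x).
Proof.
elim: n F => [|n IH] F.
  by rewrite sum_words_cons /= big_seq1; apply: eq_bigr => x _; rewrite big_seq1.
rewrite sum_words_cons sum_words_cons.
by apply: eq_bigr => x _; rewrite IH.
Qed.

Lemma sum_words_cat (T : finType) a b (F : seq T -> R) :
  \sum_(w <- words T (a + b)) F w =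
  \sum_(u <- words T a) \sum_(v <- words T b) F (u ++ v).
Proof.
elim: a F => [|a IH] F; first by rewrite add0n /= big_seq1.
rewrite addSn sum_words_cons sum_words_cons.
by apply: eq_bigr => x _; rewrite IH.
Qed.

Lemma sum_tuple_words (T : finType) n (F : seq T -> R) :
  \sum_(t : n.-tuple T) F t = \sum_(w <- words T n) F w.
Proof.
rewrite -big_enum -(big_map val xpredT F).
apply: perm_big; apply: uniq_perm.
- rewrite map_inj_uniq ?enum_uniq //; exact: val_inj.
- exact: uniq_words.
move=> w; rewrite mem_words; apply/mapP/idP => [[t _ ->]|Hw].
  by rewrite size_tuple.
by exists (Tuple Hw); rewrite ?mem_enum.
Qed.

End Sums.

Section G.
Variable R : realType.
Lemma ln_le_sub1 (y : R) : 0 < y -> ln y <= y - 1.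
Proof.
move=> y0; have := @le_ln1Dx R (y - 1); rewrite addrCA subrr addr0; apply.

lra.
Qed.

Lemma gibbs_pt (p q : R) : 0 <= p -> 0 <= q -> (0 < p -> 0 < q) ->
  p * (ln q - ln p) <= q - p.
Proof.
move=> p0 q0 pq; have [->|pn0] := eqVneq p 0; first by rewrite mul0r subr0.
have pp : 0 < p by rewrite lt0r pn0.
have qp := pq pp.
rewrite -ln_div ?posrE //.
apply: le_trans (_ : p * (q / p - 1) <= _).
  by rewrite ler_pM2l // ln_le_sub1 // divr_gt0.
by rewrite mulrBr mulr1 mulrCA divff ?mulr1.
Qed.
End G.


Section E.
Variable R : realType.
Variables (X : finType) (s : nat).
Variables (f : 'I_s -> X -> seq bool) (g : 'I_s -> X -> 'I_s).

Definition tw (k : nat) : R := (2%:R ^+ k)^-1.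

Lemma tw_gt0 k : 0 < tw k.
Proof. by rewrite /tw invr_gt0 exprn_gt0. Qed.

Lemma twD a b : tw (a + b) = tw a * tw b.
Proof. by rewrite /tw exprD invfM. Qed.

Lemma tw_le a b : (a <= b)%N -> tw b <= tw a.
Proof.
move=> ab; rewrite /tw lef_pV2 ?posrE ?exprn_gt0 //.
by rewrite ler_eXn2l // ltr1n.
Qed.

Lemma sum_delta (T : finType) (a : T) (G : T -> R) :
  \sum_(y : T) (a == y)%:R * G y = G a.
Proof.
rewrite (bigD1 a) //= eqxx mul1r big1 ?addr0 // => y /negPf.
by rewrite eq_sym => ->; rewrite mul0r.
Qed.

Lemma gstar_cat z u v : gstar g z (u ++ v) = gstar g (gstar g z u) v.
Proof. by elim: u z => [|x u IH] z //=. Qed.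

Lemma fstar_cat z u v :
  fstar f g z (u ++ v) = fstar f g z u ++ fstar f g (gstar g z u) v.
Proof. by elim: u z => [|x u IH] z //=; rewrite IH catA. Qed.

Lemma size_f_le z x : (size (f z x) <= Lmax f)%N.
Proof. by rewrite /Lmax; apply: (@leq_bigmax _ (fun zx : 'I_s * X => size (f zx.1 zx.2)) (z, x)). Qed.

Lemma size_fstar_le z w : (size (fstar f g z w) <= size w * Lmax f)%N.
Proof.
elim: w z => [|x w IH] z //=.
by rewrite size_cat mulSn leq_add ?size_f_le ?IH.
Qed.

Definition Sk n z z' : R :=
  \sum_(w <- words X n) (gstar g z w == z')%:R * tw (size (fstar f g z w)).

Lemma S_ge0 n z z' : 0 <= Sk n z z'.
Proof.
by apply: sumr_ge0 => w _; rewrite mulr_ge0 ?ler0n ?ltW ?tw_gt0.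
Qed.

Lemma kraft_iter n z z' :
  (iter n (fun B => B *m kraft_matrix R f g) 1%:M) z z' = Sk n z z'.
Proof.
elim: n z' => [|n IH] z'.
  by rewrite /Sk /= big_seq1 /= mxE /tw expr0 invr1 mulr1.
rewrite iterS mxE.
under eq_bigr => y _ do rewrite IH mxE.
rewrite /Sk sum_words_rcons.
under eq_bigr => y _ do rewrite mulr_suml.
rewrite exchange_big /=; apply: eq_bigr => v _.
under eq_bigr => y _ do rewrite -mulrA.
rewrite sum_delta big_mkcond mulr_sumr; apply: eq_bigr => x _.
rewrite -cats1 gstar_cat fstar_cat size_cat /= cats0.
by case: eqP => _; rewrite ?mul1r ?mul0r ?mulr0 ?twD.
Qed.

Lemma S_super a b z z' z'' : Sk a z z' * Sk b z' z'' <= Sk (a + b) z z''.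
Proof.
rewrite /Sk sum_words_cat mulr_suml; apply: ler_sum => u _.
rewrite mulr_sumr; apply: ler_sum => v _.
rewrite gstar_cat fstar_cat size_cat twD.
case: (eqVneq (gstar g z u) z') => [->|ne].
  by rewrite ?eqxx mul1r mulrCA.
by rewrite mul0r mul0r mulr_ge0 ?ler0n // mulr_ge0 ?ltW ?tw_gt0.
Qed.

Lemma S0 z : Sk 0 z z = 1.
Proof. by rewrite /Sk /= big_seq1 /= eqxx mul1r /tw expr0 invr1. Qed.

Lemma S_pow N z k : Sk N z z ^+ k <= Sk (k * N) z z.
Proof.
elim: k => [|k IH]; first by rewrite expr0 mul0n S0.
rewrite exprS mulSn; apply: le_trans (S_super N (k * N) z z z).
by rewrite ler_wpM2l ?S_ge0.
Qed.

Lemma sum_count (T : Type) (P : pred T) (U : seq T) :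
  \sum_(u <- U) (P u)%:R = (count P U)%:R :> R.
Proof. by elim: U => [|u U IH]; rewrite ?big_nil ?big_cons //= IH natrD. Qed.

Lemma sum_uniq_bits (U : seq (seq bool)) N : uniq U ->
  (forall u, u \in U -> (size u <= N)%N) ->
  \sum_(u <- U) tw (size u) <= N.+1%:R.
Proof.
move=> uU HU.
have -> : \sum_(u <- U) tw (size u) =
    \sum_(k < N.+1) \sum_(u <- U) (size u == k)%:R * tw k.
  rewrite exchange_big /= big_seq [RHS]big_seq; apply: eq_bigr => u /HU Hu.
  have Hu' : (size u < N.+1)%N by [].
  rewrite -(sum_delta (Ordinal Hu') (fun k : 'I_N.+1 => tw k)) /=.
  by apply: eq_bigr.
apply: le_trans (_ : \sum_(k < N.+1) (1 : R) <= _); last first.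
  by rewrite sumr_const card_ord.
apply: ler_sum => k _.
rewrite -mulr_suml sum_count.
have Hc : (count (fun u => size u == k) U <= 2 ^ k)%N.
  rewrite -size_filter.
  have := uniq_leq_size (filter_uniq (fun u => size u == k) uU)
    (_ : {subset _ <= words bool k}).
  rewrite size_words card_bool; apply.
  by move=> u; rewrite mem_filter mem_words => /andP[].
apply: le_trans (_ : (2 ^ k)%:R * tw k <= _).
  by apply: ler_wpM2r; [exact: ltW (tw_gt0 _) | rewrite ler_nat].
by rewrite natrX /tw mulfV // expf_neq0 // pnatr_eq0.
Qed.

Lemma S_IL n z z' : IL f g -> Sk n z z' <= (n * Lmax f).+1%:R.
Proof.
move=> Hil.
have -> : Sk n z z' = \sum_(w <- [seq w <- words X n | gstar g z w == z'])
    tw (size (fstar f g z w)).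
  rewrite big_filter big_mkcond /=; apply: eq_bigr => w _.
  by case: eqP; rewrite ?mul1r ?mul0r.
rewrite -(big_map (fun w => fstar f g z w) xpredT (fun u => tw (size u))).
apply: sum_uniq_bits.
  rewrite map_inj_in_uniq ?filter_uniq ?uniq_words //.
  move=> w1 w2; rewrite !mem_filter !mem_words.
  move=> /andP[/eqP g1 s1] /andP[/eqP g2 s2] E.
  have [n0|npos] := posnP n.
    move: s1 s2; rewrite n0 => /eqP/size0nil -> /eqP/size0nil -> //.
  have := Hil z n npos (Tuple s1) (Tuple s2).
  rewrite /= E g1 g2 => /(_ erefl) H.
  by have := congr1 val H.
move=> u /mapP[w]; rewrite mem_filter mem_words => /andP[_ /eqP <-] ->.
exact: size_fstar_le.
Qed.

Lemma short_path z' n w : (size w <= n)%N ->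
  exists w', gstar g z' w' = gstar g z' w /\ (size w' < s)%N.
Proof.
have s0 : (0 < s)%N by apply: leq_ltn_trans (ltn_ord z').
elim: n w => [|n IH] w Hw.
  by exists [::]; move: Hw; rewrite leqn0 => /eqP/size0nil ->.
case: (ltnP (size w) s) => Hs; first by exists w.
pose st := [seq gstar g z' (take i w) | i <- iota 0 (size w).+1].
have : ~~ uniq st.
  apply/negP => ust.
  have := uniq_leq_size ust (_ : {subset st <= enum 'I_s}).
  rewrite size_enum_ord size_map size_iota => H.
  have := H (fun x _ => mem_enum _ x).
  by move=> /(leq_trans)/(_ Hs); rewrite ltnn.
move=> /(uniqPn z') [i [j [ij jst]]].
have jw : (j <= size w)%N by move: jst; rewrite size_map size_iota.
have iw : (i < (size w).+1)%N by apply: ltn_trans ij _.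
rewrite (nth_map 0%N) ?size_iota // (nth_map 0%N) ?size_iota //.
rewrite !nth_iota // !add0n => Hij.
have Hsz : (size (take i w ++ drop j w) <= n)%N.
  rewrite size_cat size_take size_drop.
  have -> : (if (i < size w)%N then i else size w) = i.
    by rewrite (leq_trans ij jw).
  move: Hw ij jw; clear; lia.
have [w'' [H1 H2]] := IH _ Hsz.
by exists w''; rewrite H1 gstar_cat Hij -gstar_cat cat_take_drop.
Qed.

End E.


Lemma nat_exp_beats M : exists k, ((k * M).+1 < 2 ^ k)%N.
Proof.
exists (4 * M.+1).
have H := ltn_expl (2 * M.+1) (isT : (1 < 2)%N).
have -> : (2 ^ (4 * M.+1) = 2 ^ (2 * M.+1) * 2 ^ (2 * M.+1))%N.
  by rewrite -expnD; congr (_ ^ _)%N; lia.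
move: H; set y := (2 ^ _)%N; nia.
Qed.

Section E2.
Variable R : realType.

Lemma bern (c : R) n : 1 <= c -> 1 + n%:R * (c - 1) <= c ^+ n.
Proof.
move=> c1; elim: n => [|n IH]; first by rewrite mul0r addr0 expr0.
rewrite exprS -natr1.
have hn : 0 <= n%:R :> R by rewrite ler0n.
have h1 := ler_wpM2l (le_trans ler01 c1) IH.
have h2 : 0 <= n%:R * ((c - 1) * (c - 1)) by rewrite mulr_ge0 // mulr_ge0 // subr_ge0.
nra.
Qed.

Variables (X : finType) (s : nat).
Variables (f : 'I_s -> X -> seq bool) (g : 'I_s -> X -> 'I_s).

Lemma S_bound l z z' : IL f g -> irreducible_mx (kraft_matrix R f g) ->
  Sk R f g l z z' <= 2%:R ^+ ((s - 1) * Lmax f).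
Proof.
move=> Hil Hirr; set K := ((s - 1) * Lmax f)%N.
rewrite leNgt; apply/negP => Hgt.
have [m] := Hirr z' z; rewrite kraft_iter => Spos.
have [w [wm Hw]] : exists w, w \in words X m /\ gstar g z' w = z.
  case: (boolP (has (fun w => gstar g z' w == z) (words X m))).
    by move=> /hasP[w wm /eqP Hw]; exists w.
  move=> /hasPn Hn; move: Spos; rewrite /Sk big1_seq ?ltxx // => w /Hn /negPf ->.
  by rewrite mul0r.
have [w' [Hw' sw']] := short_path g z' (leqnn (size w)).
rewrite Hw in Hw'.
set m' := size w'.
have S2 : tw R K <= Sk R f g m' z' z.
  rewrite /Sk (big_rem w') ?mem_words //= Hw' eqxx mul1r.
  apply: le_trans (_ : tw R (size (fstar f g z' w')) <= _).
    apply: tw_le; apply: leq_trans (size_fstar_le f g z' w') _.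
    by rewrite leq_mul2r; apply/orP; right; move: sw'; clear; lia.
  by rewrite lerDl sumr_ge0 // => v _; rewrite mulr_ge0 ?ler0n ?ltW ?tw_gt0.
set N := (l + m')%N; set c := Sk R f g N z z.
have c1 : 1 < c.
  have h1 : 1 = 2%:R ^+ K * tw R K by rewrite /tw mulfV // expf_neq0 // pnatr_eq0.
  rewrite h1; apply: (lt_le_trans _ (S_super R f g l m' z z' z)).
  have h2 : 2%:R ^+ K * tw R K < Sk R f g l z z' * tw R K.
    by rewrite ltr_pM2r ?tw_gt0.
  apply: (lt_le_trans h2).
  by rewrite ler_wpM2l ?S_ge0.
have [j Hj] : exists j, 2 <= c ^+ j.
  exists (Num.bound ((c - 1)^-1)).
  have := @archi_boundP R ((c - 1)^-1); rewrite invr_ge0 subr_ge0 ltW // => /(_ isT).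
  set b := Num.bound _ => Hb.
  apply: le_trans (bern b (ltW c1)).
  have cp : 0 < c - 1 by rewrite subr_gt0.
  rewrite -(ltr_pM2r cp) mulVf ?gt_eqF // in Hb.
  lra.
have [k Hk] := nat_exp_beats (j * N * Lmax f).
have H1 : 2%:R ^+ k <= Sk R f g (j * k * N) z z.
  apply: le_trans (S_pow R f g N z (j * k)).
  rewrite exprM; apply: lerXn2r; rewrite ?nnegrE ?ler0n //.
  by apply: le_trans Hj; rewrite ler0n.
have H2 := @S_IL R X s f g (j * k * N) z z Hil.
have := le_trans H1 H2; rewrite -natrX ler_nat.
have -> : (j * k * N * Lmax f = k * (j * N * Lmax f))%N by lia.
by rewrite leqNgt Hk.
Qed.

End E2.


Section P3.
Variable R : realType.
Variable X : finType.
Variable mu : seq X -> R.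
Hypothesis Hmu : stationary_process mu.

Lemma mu_ge0 w : 0 <= mu w. Proof. by case: Hmu. Qed.

Lemma mu_rcons_le w x : mu (rcons w x) <= mu w.
Proof.
case: Hmu => _ H0 Hr _; rewrite -(Hr w) (bigD1 x) //= lerDl.
by apply: sumr_ge0 => y _.
Qed.

Lemma mu_cons_le w x : mu (x :: w) <= mu w.
Proof.
case: Hmu => _ H0 _ Hc; rewrite -(Hc w) (bigD1 x) //= lerDl.
by apply: sumr_ge0 => y _.
Qed.

Lemma sum_mu n : \sum_(w <- words X n) mu w = 1.
Proof.
case: Hmu => H1 _ Hr _.
elim: n => [|n IH]; first by rewrite /= big_seq1.
by rewrite sum_words_rcons -[RHS]IH; apply: eq_bigr => v _; rewrite Hr.
Qed.

Lemma ln_div_term (a b : R) : 0 <= a -> a <= b ->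
  a * ln (a / b) = a * ln a - a * ln b.
Proof.
move=> a0 ab; have [->|an0] := eqVneq a 0; first by rewrite !mul0r subr0.
have ap : 0 < a by rewrite lt0r an0.
have bp : 0 < b by apply: lt_le_trans ab.
by rewrite ln_div ?posrE // mulrBr.
Qed.

Definition hh n := \sum_(w <- words X n) mu w * ln (mu w).

Definition CE m := \sum_(v <- words X m) \sum_(b : X)
  mu (rcons v b) * ln (mu (rcons v b) / mu v).

Lemma CE_h m : CE m = hh m.+1 - hh m.
Proof.
rewrite /CE /hh sum_words_rcons -sumrB; apply: eq_bigr => v _.
case: Hmu => _ _ Hr _.
have -> : mu v * ln (mu v) = \sum_(b : X) mu (rcons v b) * ln (mu v).
  by rewrite -mulr_suml Hr.
rewrite -sumrB; apply: eq_bigr => b _.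
by rewrite ln_div_term ?mu_ge0 ?mu_rcons_le.
Qed.

Lemma term_ineq (a p1 p2 p3 : R) : 0 <= a -> a <= p1 -> a <= p2 -> p2 <= p3 ->
  a - p1 * p2 / p3 <= a * (ln (a / p1) - ln (p2 / p3)).
Proof.
move=> a0 a1 a2 a3.
have [->|an0] := eqVneq a 0.
  rewrite !mul0r sub0r oppr_le0 mulr_ge0 // ?invr_ge0 ?mulr_ge0 //.
    exact: le_trans a1.
  exact: le_trans a2.
  exact: le_trans (le_trans a0 a2) a3.
have ap : 0 < a by rewrite lt0r an0.
have p1p : 0 < p1 by apply: lt_le_trans a1.
have p2p : 0 < p2 by apply: lt_le_trans a2.
have p3p : 0 < p3 by apply: lt_le_trans a3.
have Qp : 0 < p1 * p2 / p3 by rewrite divr_gt0 ?mulr_gt0.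
have H := gibbs_pt (ltW ap) (ltW Qp) (fun _ => Qp).
have lQ : ln (p1 * p2 / p3) = ln p1 + ln p2 - ln p3.
  by rewrite ln_div ?posrE ?mulr_gt0 // lnM ?posrE.
rewrite lQ in H; rewrite !ln_div ?posrE //.
move: H; set Q := p1 * p2 / p3; nra.
Qed.

Lemma CE_mono m : CE m <= CE m.+1.
Proof.
case: Hmu => _ _ Hr Hc.
have E1 : CE m.+1 = \sum_(a : X) \sum_(v <- words X m) \sum_(b : X)
    mu (a :: rcons v b) * ln (mu (a :: rcons v b) / mu (a :: v)).
  by rewrite /CE sum_words_cons.
have E2 : CE m = \sum_(a : X) \sum_(v <- words X m) \sum_(b : X)
    mu (a :: rcons v b) * ln (mu (rcons v b) / mu v).
  rewrite /CE [RHS]exchange_big /=; apply: eq_bigr => v _.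
  rewrite [RHS]exchange_big /=; apply: eq_bigr => b _.
  by rewrite -mulr_suml Hc.
rewrite -subr_ge0 E1 E2 -sumrB.
under eq_bigr => a _ do rewrite -sumrB; under eq_bigr => a _ do under eq_bigr => v _ do rewrite -sumrB.
pose Q a v b := mu (a :: v) * mu (rcons v b) / mu v.
apply: le_trans (_ : 1 - \sum_(a : X) \sum_(v <- words X m) \sum_(b : X) Q a v b <= _).
  rewrite subr_ge0.
  apply: le_trans (_ : \sum_(a : X) \sum_(v <- words X m) mu (a :: v) <= _); last first.
    by rewrite -sum_words_cons sum_mu.
  apply: ler_sum => a _; apply: ler_sum => v _.
  rewrite /Q -mulr_suml -mulr_sumr Hr.
  have [->|vn0] := eqVneq (mu v) 0; first by rewrite invr0 mulr0 mu_ge0.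
  by rewrite -mulrA mulfV // mulr1.
have -> : (1 : R) = \sum_(a : X) \sum_(v <- words X m) \sum_(b : X) mu (a :: rcons v b).
  by rewrite -(sum_mu m.+2) sum_words_cons; apply: eq_bigr => a _; rewrite sum_words_rcons.
rewrite -sumrB; apply: ler_sum => a _.
rewrite -sumrB; apply: ler_sum => v _.
rewrite -sumrB; apply: ler_sum => b _.
rewrite -mulrBr /Q.
apply: term_ineq; rewrite ?mu_ge0 //.
- by rewrite -rcons_cons mu_rcons_le.
- exact: mu_cons_le.
- exact: mu_rcons_le.
Qed.

Lemma hh_sum n : hh n = \sum_(k < n) CE k.
Proof.
elim: n => [|n IH].
  by rewrite /hh /= big_seq1 big_ord0; case: Hmu => -> _ _ _; rewrite ln1 mulr0.
by rewrite big_ord_recr /= -IH CE_h addrC subrK.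
Qed.

Lemma CE_mono_le a b : (a <= b)%N -> CE a <= CE b.
Proof.
move=> /subnK <-; elim: (b - a)%N => [|d IH]; first by rewrite add0n.
by apply: le_trans IH _; rewrite addSn CE_mono.
Qed.

Lemma hh_le l : hh l <= l%:R * CE l.-1.
Proof.
rewrite hh_sum.
apply: le_trans (_ : \sum_(k < l) CE l.-1 <= _); last by rewrite sumr_const card_ord mulr_natl.
apply: ler_sum => k _; apply: CE_mono_le.
by case: l k => [[]|l] k //=; rewrite -ltnS.
Qed.

End P3.


Section Main.
Variable R : realType.
Variables (X : finType) (s : nat).
Variables (f : 'I_s -> X -> seq bool) (g : 'I_s -> X -> 'I_s).
Variables (l : nat) (P : {ffun 'I_s * l.-tuple X -> R}).

Lemma ln2_gt0 : 0 < ln (2%:R : R).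
Proof. by apply: ln_gt0; rewrite ltr1n. Qed.

Lemma partB : is_pmf P ->
  entropy (fun xs : l.-tuple X => \sum_(z : 'I_s) P (z, xs)) <= entropy P.
Proof.
move=> [P0 P1]; rewrite /entropy lerN2.
have -> : \sum_p P p * log2 (P p) =
    \sum_(z : 'I_s) \sum_(t : l.-tuple X) P (z, t) * log2 (P (z, t)).
  by rewrite pair_bigA; apply: eq_bigr => -[z t].
rewrite exchange_big /=.
apply: ler_sum => t _; rewrite mulr_suml; apply: ler_sum => z _.
have [->|pn0] := eqVneq (P (z, t)) 0; first by rewrite !mul0r.
have pp : 0 < P (z, t) by rewrite lt0r pn0 P0.
have le : P (z, t) <= \sum_(z0 : 'I_s) P (z0, t).
  by rewrite (bigD1 z) //= lerDl sumr_ge0.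
rewrite ler_pM2l // /log2 ler_pM2r ?invr_gt0 ?ln2_gt0 //.
by rewrite ler_ln ?posrE //; apply: lt_le_trans le.
Qed.

Lemma partC (mu : seq X -> R) : stationary_process mu -> (0 < l)%N ->
  (forall xs : l.-tuple X, \sum_(z : 'I_s) P (z, xs) = mu xs) ->
  cond_entropy_last mu l <=
    entropy (fun xs : l.-tuple X => \sum_(z : 'I_s) P (z, xs)) / l%:R.
Proof.
move=> Hmu l0 HPX.
have [m lm] : exists m, l = m.+1 by exists l.-1; rewrite prednK.
have EH : entropy (fun xs : l.-tuple X => \sum_(z : 'I_s) P (z, xs)) =
    - (hh mu l / ln 2%:R).
  rewrite /entropy; under eq_bigr => t _ do rewrite HPX.
  rewrite (sum_tuple_words l (fun w => mu w * log2 (mu w))) /hh mulr_suml /log2.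
  by congr (- _); apply: eq_bigr => w _; rewrite mulrA.
have EC : cond_entropy_last mu l = - (CE mu l.-1 / ln 2%:R).
  rewrite /cond_entropy_last.
  rewrite (sum_tuple_words l (fun w => mu w * log2 (mu w / mu (take l.-1 w)))).
  rewrite lm sum_words_rcons /CE !mulr_suml; congr (- _).
  rewrite big_seq [RHS]big_seq; apply: eq_bigr => v; rewrite mem_words => /eqP sv.
  rewrite mulr_suml; apply: eq_bigr => b _.
  by rewrite -cats1 take_size_cat // /log2 mulrA.
rewrite EH EC.
have H := hh_le Hmu l.
have lp : 0 < l%:R :> R by rewrite ltr0n.
rewrite ler_pdivlMr // mulNr lerN2 mulrAC ler_pM2r ?invr_gt0 ?ln2_gt0 //.
by rewrite mulrC.
Qed.

Lemma partA : IL f g -> irreducible_mx (kraft_matrix R f g) -> is_pmf P ->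
  entropy P <= \sum_(p : 'I_s * l.-tuple X) P p * (size (fstar f g p.1 p.2))%:R
    + (2 * log2 (s%:R : R) + (s%:R - 1) * (Lmax f)%:R).
Proof.
move=> Hil Hirr [P0 P1].
have [p0 _] : exists p0 : 'I_s * l.-tuple X, true.
  case: (pickP (fun _ : 'I_s * l.-tuple X => true)) => [p0 _|H0]; first by exists p0.
  have H1 : \sum_p P p = 0 by apply: big1 => p _; have := H0 p.
  by move: P1; rewrite H1 => /eqP; rewrite eq_sym oner_eq0.
have s0 : (0 < s)%N by case: p0 => z _; apply: leq_ltn_trans (ltn_ord z).
set L := fun p : 'I_s * l.-tuple X => size (fstar f g p.1 p.2).
set T := \sum_p tw R (L p).
set EL := \sum_(p : 'I_s * l.-tuple X) P p * (size (fstar f g p.1 p.2))%:R.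
set K := ((s - 1) * Lmax f)%N.
have L2 := @ln2_gt0.
have Tp : 0 < T.
  rewrite /T (bigD1 p0) //=; apply: (lt_le_trans (tw_gt0 R (L p0))).
  by rewrite lerDl sumr_ge0 // => p _; apply: ltW (tw_gt0 R _).
have TK : T <= s%:R * s%:R * 2%:R ^+ K.
  have -> : T = \sum_(z : 'I_s) \sum_(z' : 'I_s) Sk R f g l z z'.
    have -> : T = \sum_(z : 'I_s) \sum_(t : l.-tuple X) tw R (size (fstar f g z t)).
      by rewrite pair_bigA.
    apply: eq_bigr => z _.
    rewrite (sum_tuple_words l (fun w => tw R (size (fstar f g z w)))).
    rewrite /Sk exchange_big /=; apply: eq_bigr => w _.
    by rewrite (sum_delta (gstar g z w) (fun _ => tw R (size (fstar f g z w)))).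
  apply: le_trans (_ : \sum_(z : 'I_s) \sum_(z' : 'I_s) 2%:R ^+ K <= _).
    by apply: ler_sum => z _; apply: ler_sum => z' _; apply: S_bound.
  by rewrite !sumr_const !card_ord -mulrnA -natrM mulr_natl.
have LT p : ln (tw R (L p) / T) = - ((L p)%:R * ln 2%:R) - ln T.
  rewrite ln_div ?posrE ?tw_gt0 // /tw lnV ?posrE ?exprn_gt0 ?ltr0n //.
  by rewrite lnXn ?ltr0n // mulr_natl.
have G : \sum_p P p * (ln (tw R (L p) / T) - ln (P p)) <= 0.
  apply: le_trans (_ : \sum_p (tw R (L p) / T - P p) <= _).
    apply: ler_sum => p _; apply: gibbs_pt; rewrite ?P0 ?divr_ge0 ?ltW ?tw_gt0 //.
    by move=> _; rewrite divr_gt0 ?tw_gt0.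
  by rewrite sumrB -mulr_suml -/T mulfV ?gt_eqF // P1 subrr.
have G' : - \sum_p P p * ln (P p) <= ln 2%:R * EL + ln T.
  move: G.
  have -> : \sum_p P p * (ln (tw R (L p) / T) - ln (P p)) =
      \sum_p (- (ln 2%:R * (P p * (L p)%:R)) - P p * ln T - P p * ln (P p)).
    by apply: eq_bigr => p _; rewrite LT; ring.
  rewrite !sumrB sumrN -mulr_sumr -mulr_suml P1 mul1r.
  move=> H; rewrite -/EL in H; lra.
have lnTb : ln T <= 2 * ln (s%:R : R) + K%:R * ln 2%:R.
  have sp : 0 < s%:R :> R by rewrite ltr0n.
  apply: le_trans (_ : ln (s%:R * s%:R * 2%:R ^+ K) <= _).
    by rewrite ler_ln ?posrE ?mulr_gt0 ?exprn_gt0 ?ltr0n.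
  rewrite !lnM ?posrE ?mulr_gt0 ?exprn_gt0 ?ltr0n // lnXn ?ltr0n //.
  rewrite -mulr_natl; lra.
have Kc : K%:R = (s%:R - 1) * (Lmax f)%:R :> R.
  by rewrite /K natrM natrB.
have -> : entropy P = - (\sum_p P p * ln (P p)) / ln 2%:R.
  rewrite /entropy /log2 mulNr mulr_suml; congr (- _).
  by apply: eq_bigr => p _; rewrite mulrA.
rewrite ler_pdivrMr //.
have -> : (EL + (2 * (ln (s%:R : R) / ln 2%:R) + (s%:R - 1) * (Lmax f)%:R)) * ln 2%:R
    = ln 2%:R * EL + 2 * ln (s%:R : R) + K%:R * ln 2%:R.
  rewrite Kc; field; exact: lt0r_neq0.
lra.
Qed.

End Main.

End Helpers.
Import Helpers.

Theorem mainTheorem6 (R : realType) (X : finType) (s : nat)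
  (f : 'I_s -> X -> seq bool) (g : 'I_s -> X -> 'I_s)
  (l : nat) (P : {ffun 'I_s * l.-tuple X -> R}) :
  IL f g ->
  irreducible_mx (kraft_matrix R f g) ->
  (0 < l)%N ->
  is_pmf P ->
  let PX := fun xs : l.-tuple X => \sum_(z : 'I_s) P (z, xs) in
  let EL := \sum_(p : 'I_s * l.-tuple X) P p * (size (fstar f g p.1 p.2))%:R in
  let c := 2 * log2 (s%:R : R) + (s%:R - 1) * (Lmax f)%:R in
  [/\ EL / l%:R >= entropy P / l%:R - c / l%:R,
      entropy P / l%:R - c / l%:R >= entropy PX / l%:R - c / l%:R
    & forall mu : seq X -> R, stationary_process mu ->
        (forall xs : l.-tuple X, PX xs = mu xs) ->
        EL / l%:R >= cond_entropy_last mu l - c / l%:R].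
Proof.
move=> Hil Hirr l0 HP PX EL c.
have hA := @partA R X s f g l P Hil Hirr HP.
have lp : 0 < l%:R :> R by rewrite ltr0n.
have h1 : entropy P / l%:R - c / l%:R <= EL / l%:R.
  by rewrite -mulrBl ler_pM2r ?invr_gt0 // lerBlDr.
have h2 : entropy PX / l%:R - c / l%:R <= entropy P / l%:R - c / l%:R.
  by rewrite lerD2r ler_pM2r ?invr_gt0 //; apply: partB.
split => // mu Hmu HPX.
apply: le_trans (le_trans h2 h1).
by rewrite lerD2r; apply: partC.
Qed.
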